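(* For every positive integer $m$ there exist real coefficients $d_{m}(\alpha)$, $\alpha\subseteq[n]$ with $|\alpha|\le m$ (independent of the state), such that for every $n$-qubit pure state $\ket{\psi}$, $\sum_{\mathbf{z}\in\{0,1\}^n}w(\mathbf{z})^m p_\psi(\mathbf{z})=\sum_{\alpha\subseteq[n],\,|\alpha|\le m}d_m(\alpha)\,\mathrm{Tr}[\rho_\alpha^2]$. That is, the $m$-th moment of the number of Bell pairs generated in the parallelized SWAP test is a function only of the purities of the reduced states on at most $m$ qubits.
   Context: With $\mathbb{F}^{(i)}$ the swap of the $i$-th qubits of two copies of $\ket{\psi}$, $p_\psi(\mathbf{z})=\mathrm{Tr}\big[\big(\bigotimes_{i=1}^n\tfrac12(\mathbb{1}+(-1)^{z_i}\mathbb{F}^{(i)})\big)(\ket{\psi}\!\bra{\psi})^{\otimes 2}\big]$ is the outcome distribution of the parallelized controlled-SWAP test; $w(\mathbf{z})$ is the Hamming weight (number of Bell pairs produced); $\rho_\alpha$ is the reduced state on qubits $\alpha$, with $\mathrm{Tr}[\rho_\emptyset^2]=1$. *)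

(* Defs.v *)
(* Amplitudes live in an arbitrary numClosedFieldType C
   (e.g. the complex numbers); conjugation is z^*. *)
From HB Require Import structures.
From mathcomp Require Import all_boot all_order all_algebra.
Set Implicit Arguments. Unset Strict Implicit. Unset Printing Implicit Defensive.
Import Order.TTheory GRing.Theory Num.Theory.
Local Open Scope ring_scope.

Notation bits n := {ffun 'I_n -> bool}.

(* an n-qubit (unnormalised) state vector: amplitudes in the computational basis *)
Definition qstate (C : numClosedFieldType) (n : nat) := bits n -> C.

Definition normalized (C : numClosedFieldType) (n : nat) (psi : qstate C n) : Prop :=
  \sum_(x : bits n) psi x * (psi x)^* = 1.

(* matrix element <a' b'| 1/2 (1 + (-1)^zi F) |a b> of the single-qubit-pair
   projector of the controlled-SWAP test, F = swap of the two qubits *)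
Definition swap_factor (C : numClosedFieldType) (zi a' b' a b : bool) : C :=
  2^-1 * (((a' == a) && (b' == b))%:R + (-1) ^+ zi * ((a' == b) && (b' == a))%:R).

(* p_psi(z) = Tr[(tensor_i 1/2(1 + (-1)^{z_i} F^(i))) (|psi><psi|)^{tensor 2}]
            = <psi psi| P_z |psi psi>, written in the computational basis
   (copy 1 index x, copy 2 index y). *)
Definition pswap (C : numClosedFieldType) (n : nat) (psi : qstate C n) (z : bits n) : C :=
  \sum_(x' : bits n) \sum_(y' : bits n) \sum_(x : bits n) \sum_(y : bits n)
    (psi x')^* * (psi y')^* *
    (\prod_(i < n) swap_factor C (z i) (x' i) (y' i) (x i) (y i)) *
    psi x * psi y.

Definition hweight (n : nat) (z : bits n) : nat := #|[set i | z i]|.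

(* configurations on the qubits of alpha are encoded as bit strings vanishing
   outside alpha *)
Definition supported (n : nat) (alpha : {set 'I_n}) (x : bits n) : bool :=
  [forall i, (i \notin alpha) ==> ~~ x i].

Definition merge (n : nat) (alpha : {set 'I_n}) (a b : bits n) : bits n :=
  [ffun i => if i \in alpha then a i else b i].

(* reduced density matrix rho_alpha = Tr_{[n]\alpha} |psi><psi| *)
Definition rho (C : numClosedFieldType) (n : nat) (psi : qstate C n)
    (alpha : {set 'I_n}) (a a' : bits n) : C :=
  \sum_(b : bits n | supported (~: alpha) b)
     psi (merge alpha a b) * (psi (merge alpha a' b))^*.

Definition purity (C : numClosedFieldType) (n : nat) (psi : qstate C n)
    (alpha : {set 'I_n}) : C :=
  \sum_(a : bits n | supported alpha a) \sum_(a' : bits n | supported alpha a')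
     rho psi alpha a a' * rho psi alpha a' a.

(* Main.v *)
Require Import Defs.
From HB Require Import structures.
From mathcomp Require Import all_boot all_order all_algebra ring.
Set Implicit Arguments. Unset Strict Implicit. Unset Printing Implicit Defensive.
Import Order.TTheory GRing.Theory Num.Theory.
Local Open Scope ring_scope.

Lemma prod_natb (R : comNzRingType) (I : finType) (b : I -> bool) :
  \prod_(i : I) (b i)%:R = [forall i, b i]%:R :> R.
Proof.
case: (boolP [forall i, b i]) => [/forallP H | /forallPn [i Hi]].
  by rewrite big1 // => i _; rewrite H.
by rewrite (bigD1 i) //= (negbTE Hi) mul0r.
Qed.

Definition Dm (n : nat) (f x' y' x y : bits n) : bool :=
  [forall i, if f i then (x' i == y i) && (y' i == x i)
             else (x' i == x i) && (y' i == y i)].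

Lemma stepA (C : numClosedFieldType) (n : nat) (z x' y' x y : bits n) :
 \prod_(i < n) swap_factor C (z i) (x' i) (y' i) (x i) (y i) =
 \sum_(f : bits n) ((2^-1)^+n * \prod_(i < n) (if f i then (-1)^+(z i) else 1))
     * (Dm f x' y' x y)%:R.
Proof.
transitivity (\prod_(i < n) \sum_(c : bool) ((2^-1 : C) * (if c then (-1)^+(z i) else 1)
  * (if c then (x' i == y i) && (y' i == x i) else (x' i == x i) && (y' i == y i))%:R)).
  by apply eq_bigr => i _; rewrite big_bool /= /swap_factor; ring.
rewrite bigA_distr_bigA; apply eq_bigr => f _.
rewrite big_split big_split /= prodr_const card_ord.
by rewrite (@prod_natb C _ (fun i => if f i then (x' i == y i) && (y' i == x i)
             else (x' i == x i) && (y' i == y i))).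
Qed.
Definition mk (n : nat) (b : {set 'I_n}) (x : bits n) : bits n :=
  [ffun i => (i \in b) && x i].

Lemma split_eq (n : nat) (b : {set 'I_n}) (a c x : bits n) :
  [&& supported b a, supported (~: b) c & x == Defs.merge b a c] =
  (a == mk b x) && (c == mk (~: b) x).
Proof.
apply/idP/idP.
  case/and3P => /forallP Ha /forallP Hc /eqP ->; apply/andP; split;
  apply/eqP/ffunP => i; rewrite !ffunE ?inE;
  have := Ha i; have := Hc i; rewrite !inE; case: (i \in b) => //=.
  by move=> _ /negbTE.
  by move=> /negbTE.
case/andP => /eqP -> /eqP ->; apply/and3P; split.
- by apply/forallP => i; rewrite ffunE; case: (i \in b).
- by apply/forallP => i; rewrite ffunE; case: (i \in ~: b).
- by apply/eqP/ffunP => i; rewrite !ffunE inE; case: (i \in b).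
Qed.

Lemma sum_split (C : numClosedFieldType) (n : nat) (b : {set 'I_n}) (G : bits n -> bits n -> C) :
  \sum_(a | supported b a) \sum_(c | supported (~: b) c) G a c =
  \sum_(x : bits n) G (mk b x) (mk (~: b) x).
Proof.
transitivity (\sum_(a : bits n) \sum_(c : bits n) \sum_(x : bits n)
   ([&& supported b a, supported (~: b) c & x == Defs.merge b a c])%:R * G a c).
  rewrite big_mkcond; apply eq_bigr => a _.
  case: (boolP (supported b a)) => Ha.
    rewrite big_mkcond; apply eq_bigr => c _.
    case: (boolP (supported (~: b) c)) => Hc /=.
      rewrite (bigD1 (Defs.merge b a c)) //= eqxx mul1r big1 ?addr0 // => x /negbTE ->.
      by rewrite mul0r.
    by rewrite big1 // => x _; rewrite mul0r.
  by rewrite big1 // => c _; rewrite big1 // => x _; rewrite mul0r.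
under eq_bigr => a _ do rewrite exchange_big.
rewrite exchange_big; apply eq_bigr => x _ /=.
under eq_bigr => a _ do under eq_bigr => c _ do rewrite split_eq.
rewrite (bigD1 (mk b x)) //= [X in _ + X]big1 ?addr0; last first.
  by move=> a /negbTE Ha; rewrite big1 // => c _; rewrite Ha mul0r.
rewrite (bigD1 (mk (~: b) x)) //= !eqxx mul1r [X in _ + X]big1 ?addr0 //.
by move=> c /negbTE Hc; rewrite Hc mul0r.
Qed.

Lemma merge_mk (n : nat) (b : {set 'I_n}) (x y : bits n) :
  Defs.merge b (mk b x) (mk (~: b) y) = Defs.merge b x y.
Proof. by apply/ffunP => i; rewrite !ffunE inE; case: (i \in b). Qed.

Lemma merge_id (n : nat) (b : {set 'I_n}) (x : bits n) : Defs.merge b x x = x.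
Proof. by apply/ffunP => i; rewrite !ffunE; case: (i \in b). Qed.

Lemma Dm_eq (n : nat) (f x' y' x y : bits n) :
  Dm f x' y' x y = (x' == Defs.merge [set i | f i] y x) && (y' == Defs.merge [set i | f i] x y).
Proof.
apply/idP/idP.
  move/forallP => H; apply/andP; split; apply/eqP/ffunP => i; rewrite !ffunE inE;
  by have := H i; case: (f i) => /andP [/eqP H1 /eqP H2]; rewrite ?H1 ?H2.
case/andP => /eqP -> /eqP ->; apply/forallP => i; rewrite !ffunE inE.
by case: (f i); rewrite !eqxx.
Qed.

Lemma sum_delta (C : numClosedFieldType) (T : finType) (X : T) (F : T -> C) :
  \sum_(x : T) (x == X)%:R * F x = F X.
Proof.
rewrite (bigD1 X) //= eqxx mul1r [X in _ + X]big1 ?addr0 // => x /negbTE ->.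
by rewrite mul0r.
Qed.

Definition Qf (C : numClosedFieldType) (n : nat) (psi : qstate C n) (f : bits n) : C :=
  \sum_(x' : bits n) \sum_(y' : bits n) \sum_(x : bits n) \sum_(y : bits n)
    (psi x')^* * (psi y')^* * (Dm f x' y' x y)%:R * psi x * psi y.

Lemma Q_purity (C : numClosedFieldType) (n : nat) (psi : qstate C n) (f : bits n) :
  Qf psi f = purity psi [set i | f i].
Proof.
set B := [set i | f i].
rewrite /Qf.
under eq_bigr => x' _ do rewrite exchange_big.
under eq_bigr => x' _ do under eq_bigr => x _ do rewrite exchange_big.
rewrite exchange_big.
under eq_bigr => x _ do rewrite exchange_big.
transitivity (\sum_(x : bits n) \sum_(y : bits n)
   (psi (Defs.merge B y x))^* * (psi (Defs.merge B x y))^* * psi x * psi y).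
  apply eq_bigr => x _; apply eq_bigr => y _.
  transitivity (\sum_(x' : bits n) \sum_(y' : bits n)
    (x' == Defs.merge B y x)%:R * ((y' == Defs.merge B x y)%:R *
      ((psi x')^* * (psi y')^* * psi x * psi y))).
    apply eq_bigr => x' _; apply eq_bigr => y' _; rewrite Dm_eq -/B.
    by case: (x' == _); case: (y' == _); rewrite /=; ring.
  under eq_bigr => x' _ do rewrite -mulr_sumr sum_delta.
  by rewrite sum_delta.
rewrite /purity.
transitivity (\sum_(a | supported B a) \sum_(b | supported (~: B) b)
   \sum_(a' | supported B a') \sum_(b' | supported (~: B) b')
   psi (Defs.merge B a b) * (psi (Defs.merge B a' b))^* *
   psi (Defs.merge B a' b') * (psi (Defs.merge B a b'))^*); last first.
  apply eq_bigr => a _; rewrite exchange_big; apply eq_bigr => a' _.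
  rewrite /rho mulr_suml; apply eq_bigr => b _; rewrite mulr_sumr.
  by apply eq_bigr => b' _; ring.
symmetry.
under eq_bigr => a _ do under eq_bigr => b _ do rewrite sum_split.
rewrite sum_split; apply eq_bigr => x _; apply eq_bigr => y _.
rewrite !merge_mk merge_id merge_id; ring.
Qed.
Lemma hweightE (C : numClosedFieldType) (n : nat) (z : bits n) :
  (hweight z)%:R = \sum_(i < n) (z i)%:R :> C.
Proof.
rewrite /hweight -sum1_card natr_sum big_mkcond /=; apply eq_bigr => i _.
by rewrite inE; case: (z i).
Qed.

Lemma vanish (C : numClosedFieldType) (n m : nat) (al : {set 'I_n}) :
  (m < #|al|)%N ->
  \sum_(z : bits n) (hweight z)%:R ^+ m *
     \prod_(i < n) (if i \in al then (-1)^+(z i) else 1) = 0 :> C.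
Proof.
move=> Hm.
have E z : (hweight z)%:R ^+ m = \sum_(t : {ffun 'I_m -> 'I_n}) \prod_(k : 'I_m) (z (t k))%:R :> C.
  rewrite hweightE -[in LHS](card_ord m) -prodr_const.
  by rewrite -(bigA_distr_bigA (fun (k : 'I_m) (i : 'I_n) => (z i)%:R : C)); apply: eq_bigl.
under eq_bigr => z _ do rewrite E mulr_suml.
rewrite exchange_big /=; apply big1 => t _.
have Hnot : ~~ (al \subset codom t).
  apply/negP => Hs; have := subset_leq_card Hs.
  have := card_size (codom t); rewrite size_codom card_ord => H1 H2.
  by move: Hm; rewrite ltnNge (leq_trans H2 H1).
case/subsetPn: Hnot => i0 Hi0 Hc.
transitivity (\sum_(z : bits n) \prod_(i < n)
   ((if i \in codom t then (z i)%:R else 1) * (if i \in al then (-1)^+(z i) else 1)) : C).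
  apply eq_bigr => z _; rewrite big_split /=; congr (_ * _).
  transitivity (\prod_(i : 'I_m) (z (t i) : bool)%:R : C) => //.
  rewrite (@prod_natb C _ (fun k => z (t k))).
  transitivity (\prod_(i < n) (if i \in codom t then z i else true)%:R : C).
    rewrite (@prod_natb C _ (fun i => if i \in codom t then z i else true)); congr (_%:R); congr (nat_of_bool _).
    apply/forallP/forallP => H i.
      by case: ifP => // /codomP [k ->]; exact: H.
    by have := H (t i); rewrite codom_f.
  by apply eq_bigr => i _; case: (i \in codom t).
rewrite -(bigA_distr_bigA (fun i (c : bool) => (if i \in codom t then c%:R else 1) *
   (if i \in al then (-1)^+c else 1) : C)).
rewrite (bigD1 i0) //= big_bool /= (negbTE Hc) Hi0 /=.
by rewrite expr1 expr0 !mul1r addNr mul0r.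
Qed.
Definition gF (C : numClosedFieldType) (n m : nat) (f : bits n) : C :=
  (2^-1)^+n * \sum_(z : bits n) (hweight z)%:R ^+ m *
     \prod_(i < n) (if f i then (-1)^+(z i) else 1).

Lemma expand (C : numClosedFieldType) (n m : nat) (psi : qstate C n) :
  \sum_(z : bits n) (hweight z)%:R ^+ m * pswap psi z =
  \sum_(f : bits n) gF C m f * Qf psi f.
Proof.
symmetry.
transitivity (\sum_(f : bits n) \sum_(z : bits n) \sum_(x' : bits n) \sum_(y' : bits n)
  \sum_(x : bits n) \sum_(y : bits n)
  ((2^-1)^+n * \prod_(i < n) (if f i then (-1)^+(z i) else 1)) *
  (Dm f x' y' x y)%:R * ((hweight z)%:R ^+ m * ((psi x')^* * (psi y')^* * psi x * psi y))).
  apply eq_bigr => f _; rewrite /gF [in X in X * _]mulr_sumr mulr_suml; apply eq_bigr => z _.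
  rewrite /Qf mulr_sumr; apply eq_bigr => x' _.
  rewrite mulr_sumr; apply eq_bigr => y' _.
  rewrite mulr_sumr; apply eq_bigr => x _.
  rewrite mulr_sumr; apply eq_bigr => y _.
  ring.
rewrite exchange_big; apply eq_bigr => z _.
rewrite /pswap mulr_sumr exchange_big; apply eq_bigr => x' _.
rewrite mulr_sumr exchange_big; apply eq_bigr => y' _.
rewrite mulr_sumr exchange_big; apply eq_bigr => x _.
rewrite mulr_sumr exchange_big; apply eq_bigr => y _.
rewrite stepA mulr_sumr !mulr_suml mulr_sumr; apply eq_bigr => f _.
ring.
Qed.

Unset Implicit Arguments.
Set Strict Implicit.
Theorem mainTheorem16 (C : numClosedFieldType) (n m : nat) (hm : (0 < m)%N) :
  exists d : {set 'I_n} -> C,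
    (forall alpha, d alpha \is Num.real) /\
    forall psi : qstate C n, normalized psi ->
      \sum_(z : bits n) (hweight z)%:R ^+ m * pswap psi z =
      \sum_(alpha : {set 'I_n} | (#|alpha| <= m)%N) d alpha * purity psi alpha.
Proof.
pose d := fun al : {set 'I_n} => (2^-1 : C)^+n * \sum_(z : bits n) (hweight z)%:R ^+ m *
     \prod_(i < n) (if i \in al then (-1)^+(z i) else 1).
exists d; split.
  move=> al; apply: rpredM.
    by apply: rpredX; rewrite rpredV; exact: rpred_nat.
  apply: rpred_sum => z _; apply: rpredM; first by apply: rpredX; exact: rpred_nat.
  apply: rpred_prod => i _; case: ifP => _; last exact: rpred1.
  by apply: rpredX; rewrite rpredN; exact: rpred1.
move=> psi _; rewrite expand.
under eq_bigr => f _ do rewrite Q_purity.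
rewrite (reindex (fun al : {set 'I_n} => [ffun i => i \in al])) /=; last first.
  apply: onW_bij; exists (fun f : bits n => [set i | f i]) => [al|f].
    by apply/setP => i; rewrite inE ffunE.
  by apply/ffunP => i; rewrite ffunE inE.
have Hs (al : {set 'I_n}) : [set i | [ffun i => i \in al] i] = al.
  by apply/setP => i; rewrite inE ffunE.
have Hg (al : {set 'I_n}) : gF C m [ffun i => i \in al] = d al.
  rewrite /gF /d; congr (_ * _); apply eq_bigr => z _; congr (_ * _).
  by apply eq_bigr => i _; rewrite ffunE.
rewrite (bigID (fun al : {set 'I_n} => (#|al| <= m)%N)) /= [X in _ + X]big1 ?addr0.
  by apply eq_bigr => al _; rewrite Hs Hg.
move=> al; rewrite -ltnNge => Hal; rewrite Hg /d vanish // mulr0 mul0r //.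
Qed.
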